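(* Let $\mathcal{G}$ be a dynamic multigraph with finite vertex set $\mathcal{V}$ and finite edge set $\mathcal{E}$, and let $\mathcal{L}_{\mathcal{G}}$ be its increment-weighted line graph and $\mathcal{L}^*_{\mathcal{G}}=\bigcup_{i\in\mathcal{V}}\mathcal{M}_{\mathcal{G}}(i)$ its line graph skeleton, both as defined in the context. Then the weighted connectivities of $\mathcal{L}_{\mathcal{G}}$ and $\mathcal{L}^*_{\mathcal{G}}$ are equivalent: for every threshold $\omega\in\mathbb{R}$, $\mathrm{comps}(\mathcal{L}^*_{\mathcal{G}},\omega)=\mathrm{comps}(\mathcal{L}_{\mathcal{G}},\omega)$.
   Context: A dynamic multigraph $\mathcal{G}(\mathcal{V},\mathcal{E},\mathcal{T})$ consists of a finite vertex set $\mathcal{V}$ and a finite set $\mathcal{E}$ of directed timestamped edges $e_r=(i_r,j_r,t_r)$ with $i_r,j_r\in\mathcal{V}$, $i_r\neq j_r$ (no self loops), $t_r\in\mathcal{T}=[0,T]$; several edges may join the same ordered pair at different times, timestamps may tie across edges, and no two edges agree in both ordered vertex pair and timestamp. For $i\in\mathcal{V}$, $\mathcal{E}^{(in)}_i=\{e_r\in\mathcal{E}: j_r=i\}$, $\mathcal{E}^{(out)}_i=\{e_r\in\mathcal{E}: i_r=i\}$, $\mathcal{E}_i=\mathcal{E}^{(in)}_i\cup\mathcal{E}^{(out)}_i$. Increment-weighted line graph $\mathcal{L}_{\mathcal{G}}$: its vertex set is $\mathcal{E}$; for $e_r,e_s\in\mathcal{E}$ there is a directed edge $(e_r,e_s)$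 with weight $w_{rs}=t_s-t_r$ if and only if $j_r=i_s$ (tip-to-tail) and $t_r\le t_s$. Line graph skeleton: for each $i\in\mathcal{V}$, the set $\mathcal{M}_{\mathcal{G}}(i)$ is produced as follows. Sort $\mathcal{E}_i$ by timestamp, with incoming edges placed before outgoing edges when timestamps are equal. Start with an empty list $W$ and an empty output. Process the edges of $\mathcal{E}_i$ in sorted order: if the current edge $e_j$ is incoming to $i$, append it to $W$; if it is outgoing from $i$, then for every $e_k\in W$ add the pair $(e_k,e_j)$ to the output, and then replace $W$ by the one-element list consisting of the last element of $W$ (leaving $W$ empty if it was empty). Each output pair $(e_k,e_j)$ is an edge with weight $t_j-t_k$. $\mathcal{L}^*_{\mathcal{G}}$ is the weighted graph on vertex set $\mathcal{E}$ whose edge set is the union over all $i\in\mathcal{V}$ of these outputs. Weight-filtered connected components: for a weighted graph $\mathcal{H}$ and threshold $\omega$, $\mathrm{comps}(\mathcal{H},\omega)$ is the set of connected components (ignoring edge directions) of the graph on the same vertex set that keeps only the edges of weight $\le\omega$. Two weighted graphs on the same vertex set have equivalent weighted connectivities if their weight-filtered connected components coincide for every $\omega$. *)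

(* Defs.v *)
From HB Require Import structures.
From mathcomp Require Import all_boot all_order all_algebra.
From mathcomp Require Import reals.
Set Implicit Arguments. Unset Strict Implicit. Unset Printing Implicit Defensive.
Import Order.TTheory GRing.Theory Num.Theory.
Local Open Scope ring_scope.

Section Dyn.
Variables (R : realType) (V E : finType).
Variables (src tgt : E -> V) (time : E -> R).

Definition filtered (adj : rel E) (wt : E -> E -> R) (om : R) : rel E :=
  fun e f => adj e f && (wt e f <= om).
Definition symc (a : rel E) : rel E := fun x y => a x y || a y x.
Definition comps (a : rel E) : {set {set E}} :=
  [set [set y | connect (symc a) x y] | x : E].

Definition incr (e f : E) : R := time f - time e.

Definition line_adj : rel E :=
  fun e f => (tgt e == src f) && (time e <= time f).

Definition incident (i : V) : seq E :=
  [seq e <- enum E | (src e == i) || (tgt e == i)].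

(* Order used for sorting E_i: by timestamp, incoming before outgoing on ties. *)
Definition skel_le (i : V) : rel E :=
  fun e f => (time e < time f) ||
             ((time e == time f) && ((tgt e == i) || (tgt f != i))).

Definition valid_order (i : V) (s : seq E) : Prop :=
  perm_eq s (incident i) /\ sorted (skel_le i) s.

(* The skeleton procedure at vertex i, run on the sorted list s with
   current list W; returns the output pairs. [drop (size W).-1 W] is the
   one-element list of the last element of W (empty if W is empty). *)
Fixpoint skel_run (i : V) (W : seq E) (s : seq E) : seq (E * E) :=
  match s with
  | [::] => [::]
  | e :: s' =>
      if tgt e == i then skel_run i (rcons W e) s'
      else [seq (k, e) | k <- W] ++ skel_run i (drop (size W).-1 W) s'
  end.

(* Edge relation of the line graph skeleton (union over i of M_G(i)),
   given a choice of valid sorted order for each vertex. *)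
Definition skel_adj (ord : V -> seq E) : rel E :=
  fun e f => [exists i : V, (e, f) \in skel_run i [::] (ord i)].

End Dyn.

(* Main.v *)
Require Import Defs.
From HB Require Import structures.
From mathcomp Require Import all_boot all_order all_algebra.
From mathcomp Require Import reals.
Import Order.TTheory GRing.Theory Num.Theory.
Local Open Scope ring_scope.

Section Proofs.
Variables (R : realType) (V E : finType) (src tgt : E -> V) (time : E -> R).
Variable (i : V) (om : R).

Definition tle : rel E := fun a b => time a <= time b.
Lemma tle_trans : transitive tle.
Proof. move=> b a c; rewrite /tle; exact: le_trans. Qed.

Lemma runA W s k g : (k, g) \in skel_run tgt i W s ->
  all (fun k => tgt k == i) W -> sorted tle s ->
  (forall k, k \in W -> all (tle k) s) ->
  [&& tgt k == i, tgt g != i, g \in s & time k <= time g].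
Proof.
elim: s W => [|a s IH] W //=.
move=> + HW Hs HWs.
have Hs' : sorted tle s by exact: path_sorted Hs.
have Ha : all (tle a) s by exact: order_path_min tle_trans Hs.
case: ifP => Hta.
  move=> H.
  have H1 : all (fun k => tgt k == i) (rcons W a) by rewrite all_rcons Hta.
  have H2 : forall k, k \in rcons W a -> all (tle k) s.
    move=> x; rewrite mem_rcons inE => /orP [/eqP -> //|/HWs] /=.
    by case/andP.
  have /and4P [h1 h2 h3 h4] := IH _ H H1 Hs' H2.
  by rewrite h1 h2 inE h3 orbT h4.
rewrite mem_cat => /orP [].
  case/mapP => x xW [-> ->]; rewrite Hta inE eqxx /=.
  move/allP: HW => /(_ x xW) ->.
  by move: (HWs x xW) => /= /andP [].
move=> H.
have H1 : all (fun k => tgt k == i) (drop (size W).-1 W).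
  apply/allP => x /mem_drop xW; by move/allP: HW => /(_ x xW).
have H2 : forall k, k \in drop (size W).-1 W -> all (tle k) s.
  move=> x /mem_drop /HWs /= /andP [] //.
have /and4P [h1 h2 h3 h4] := IH _ H H1 Hs' H2.
by rewrite h1 h2 inE h3 orbT h4.
Qed.

Lemma skel_sub W s1 s2 : exists W', {subset skel_run tgt i W' s2 <= skel_run tgt i W (s1 ++ s2)}.
Proof.
elim: s1 W => [|a s1 IH] W /=; first by exists W.
case: ifP => _.
  by have [W' H] := IH (rcons W a); exists W'.
have [W' H] := IH (drop (size W).-1 W); exists W' => x /H.
by rewrite mem_cat orbC => ->.
Qed.

Definition G (S : seq (E * E)) : rel E :=
  fun a b => ((a, b) \in S) && (time b - time a <= om).

Lemma drop_last (W : seq E) x : W != [::] -> drop (size W).-1 W = [:: last x W].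
Proof.
case/lastP: W => [//|W l] _.
by rewrite size_rcons /= last_rcons -cats1 drop_size_cat.
Qed.

Lemma runB W s x f : x \in W -> sorted tle s ->
  time x <= time (last x W) -> all (tle (last x W)) s ->
  f \in s -> tgt f != i -> time f - time x <= om ->
  connect (symc (G (skel_run tgt i W s))) x f.
Proof.
elim: s W x => [|a s IH] W x //= xW Hs Hxl Hls.
have Hs' : sorted tle s by exact: path_sorted Hs.
have Ha : all (tle a) s by exact: order_path_min tle_trans Hs.
move: Hls => /andP [Hla Hls].
rewrite inE => Hf Htf Hom.
case: ifP => Hta.
  have fs : f \in s by case/orP: Hf => // /eqP Efa; move: Htf; rewrite Efa Hta.
  apply: IH => //.
  - by rewrite mem_rcons inE xW orbT.
  - by rewrite last_rcons; exact: le_trans Hla.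
  - by rewrite last_rcons.
have Wn : W != [::] by case: (W) xW.
have Hxa : time a - time x <= om.
  case/orP: Hf => [/eqP Efa|fs]; first by rewrite -Efa.
  apply: le_trans Hom; rewrite lerD2r.
  by move/allP: Ha => /(_ f fs).
have Exa : symc (G ([seq (k, a) | k <- W] ++ skel_run tgt i (drop (size W).-1 W) s)) x a.
  by rewrite /symc /G mem_cat (map_f (fun k => (k, a)) xW) Hxa.
case/orP: Hf => [/eqP -> |fs]; first exact: connect1.
apply: connect_trans (connect1 Exa) _.
set l := last x W.
have lW : l \in W by rewrite /l; case/lastP: (W) Wn => // W' y _; rewrite last_rcons mem_rcons mem_head.
have Hal : symc (G ([seq (k, a) | k <- W] ++ skel_run tgt i (drop (size W).-1 W) s)) a l.
  rewrite /symc orbC /G mem_cat (map_f (fun k => (k, a)) lW) /=.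
  apply/orP; left; apply: le_trans Hxa; rewrite lerD2l lerN2 //.
apply: connect_trans (connect1 Hal) _.
have H : connect (symc (G (skel_run tgt i (drop (size W).-1 W) s))) l f.
  rewrite (drop_last _ x Wn) -/l.
  apply: IH => //; first exact: mem_head.
  apply: le_trans Hom; rewrite lerD2l lerN2 //.
apply: connect_sub H => u v Huv; apply: connect1; move: Huv.
by rewrite /symc /G !mem_cat; case/orP => /andP [-> ->]; rewrite ?orbT.
Qed.

End Proofs.

Arguments tle {R E}.
Arguments runA {R V E tgt time i W s k g}.
Arguments skel_sub {V E}.

Lemma skel_le_trans (R : realType) (V E : finType) (tgt : E -> V) (time : E -> R) i :
  transitive (skel_le tgt time i).
Proof.
move=> b a c; rewrite /skel_le.
case/orP => [Hab|/andP [/eqP Eab Hab]]; case/orP => [Hbc|/andP [/eqP Ebc Hbc]].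
- by rewrite (lt_trans Hab Hbc).
- by rewrite -Ebc Hab.
- by rewrite Eab Hbc.
- rewrite Eab Ebc eqxx ltxx /=.
  case: (tgt b == i) Hab Hbc => /=; rewrite ?orbF.
    by move=> ->.
  by move=> _ ->; rewrite orbT.
Qed.

Theorem mainTheorem1 (R : realType) (V E : finType)
    (src tgt : E -> V) (time : E -> R) (T : R)
    (Hloop : forall e, src e != tgt e)
    (Htime : forall e, 0 <= time e <= T)
    (Hdistinct : injective (fun e => (src e, tgt e, time e)))
    (ord : V -> seq E)
    (Hord : forall i, valid_order src tgt time i (ord i))
    (om : R) :
  comps (filtered (skel_adj tgt ord) (incr time) om)
  = comps (filtered (line_adj src tgt time) (incr time) om).
Proof.
have Hsort i : sorted (tle time) (ord i).
  apply: sub_sorted (proj2 (Hord i)) => a b; rewrite /skel_le /tle.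
  by case/orP => [/ltW //|/andP [/eqP -> _]].
have Hinc i g : g \in ord i -> (src g == i) || (tgt g == i).
  by rewrite (perm_mem (proj1 (Hord i))) mem_filter => /andP [].
have sub1 : subrel (filtered (skel_adj tgt ord) (incr time) om)
                   (filtered (line_adj src tgt time) (incr time) om).
  move=> k g; rewrite /filtered => /andP [/existsP [i Hi] ->]; rewrite andbT.
  have H0 : forall k', k' \in [::] -> all (tle time k') (ord i) by [].
  have /and4P [/eqP h1 h2 h3 h4] := runA Hi isT (Hsort i) H0.
  have := Hinc i g h3; rewrite (negbTE h2) orbF => /eqP h5.
  by rewrite /line_adj h1 h5 eqxx h4.
have sub2 : subrel (filtered (line_adj src tgt time) (incr time) om)
                   (connect (symc (filtered (skel_adj tgt ord) (incr time) om))).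
  move=> e f; rewrite /filtered /line_adj /incr => /andP [/andP [/eqP Hef Hle] Hom].
  set i := tgt e.
  have Hsf : src f = i by [].
  have Htf : tgt f != i by rewrite -Hsf eq_sym Hloop.
  have ei : e \in ord i by rewrite (perm_mem (proj1 (Hord i))) mem_filter eqxx orbT mem_enum.
  have fi : f \in ord i by rewrite (perm_mem (proj1 (Hord i))) mem_filter Hsf eqxx mem_enum.
  have : exists s1 s2, ord i = s1 ++ e :: s2.
    move: ei; move: (ord i) => s0; case/splitPr => s1 s2; by exists s1, s2.
  case=> s1 [s2 Es].
  have Hpw : pairwise (skel_le tgt time i) (s1 ++ e :: s2).
    by rewrite -Es -sorted_pairwise; [exact: (proj2 (Hord i))|exact: skel_le_trans].
  have fs2 : f \in s2.
    move: fi; rewrite Es mem_cat inE => /orP [fs1|/orP [/eqP Efe|//]].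
      move: Hpw; rewrite pairwise_cat => /and3P [/allrelP /(_ f e fs1 (mem_head _ _))].
      by rewrite /skel_le (negbTE Htf) eqxx andbF orbF ltNge Hle.
    by move: Htf; rewrite Efe eqxx.
  have [W' HW'] := skel_sub tgt i [::] s1 (e :: s2).
  have Hs : sorted (tle time) (e :: s2).
    by move: (Hsort i); rewrite Es => /cat_sorted2 [].
  have := @runB _ _ _ tgt time i om (rcons W' e) s2 e f.
  rewrite mem_rcons mem_head last_rcons lexx => /(_ isT (path_sorted Hs) isT
     (order_path_min (@tle_trans _ _ time) Hs) fs2 Htf Hom) H.
  apply: connect_sub H => u v; rewrite /symc /G /filtered /incr.
  have sub : forall u v, (u, v) \in skel_run tgt i (rcons W' e) s2 -> skel_adj tgt ord u v.
    move=> u' v' Huv; apply/existsP; exists i; rewrite Es; apply: HW' => /=.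
    by rewrite /i eqxx.
  by case/orP => /andP [/sub H1 H2]; apply: connect1; rewrite H1 H2 ?orbT.
have Hc : connect (symc (filtered (skel_adj tgt ord) (incr time) om)) =2
          connect (symc (filtered (line_adj src tgt time) (incr time) om)).
  move=> x y; apply/idP/idP.
    apply: connect_sub => u v /orP [] /sub1 H; apply: connect1; by rewrite /symc H ?orbT.
  apply: connect_sub => u v /orP [] /sub2 H //.
  rewrite sym_connect_sym // => a b; by rewrite /symc orbC.
rewrite /comps; apply: eq_imset => x; apply/setP => y; by rewrite !inE Hc.
Qed.
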